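(* Let $k\ge n\ge 3$, let $\pi$ assign to each $n$-element subset $S\subseteq[k]$ a string $\pi(S)$ of length $n$ that is an ordering of $S$, let $Q\subseteq[k]$ with $|Q|=n-2$, and let $R,R'\in\mathcal U_Q$ be distinct. Suppose $R$ freezes $A_R\subseteq R$ with freezing function $g_R$ and $R'$ freezes $A_{R'}\subseteq R'$ with freezing function $g_{R'}$. Then $g_R(a)=g_{R'}(a)$ for every $a\in A_R\cap A_{R'}$.
   Context: $[k]=\{1,\dots,k\}$; $\pi(S)[i]$ is the letter at position $i\in[n]$ of $\pi(S)$. For a set $R\subseteq[k]$, $\mathcal U_R$ is the set of all sets $S\subseteq[k]$ with $R\subset S$ and $|S|=|R|+1$. For $|R|=n-1$ and $A_R\subseteq R$, $R$ freezes $A_R$ (with freezing function $g_R$) if there is a one-to-one map $g_R:A_R\to[n]$ such that $\pi(S)[g_R(a)]=a$ for all $a\in A_R$ and all $S\in\mathcal U_R$. *)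

(* Defs.v *)
From mathcomp Require Import all_boot.
Set Implicit Arguments. Unset Strict Implicit. Unset Printing Implicit Defensive.

(* Conventions: the alphabet [k] = {1..k} is modelled by 'I_k (letter i+1 <-> i),
   positions [n] = {1..n} by 'I_n (position j+1 <-> j).
   pi S is an n-tuple; (pi S)[i] is tnth (pi S) i. *)

Definition is_ordering (k n : nat) (S : {set 'I_k}) (w : n.-tuple 'I_k) : Prop :=
  uniq w /\ (forall x, (x \in w) = (x \in S)).

Definition valid_pi (k n : nat) (pi : {set 'I_k} -> n.-tuple 'I_k) : Prop :=
  forall S : {set 'I_k}, #|S| = n -> is_ordering S (pi S).

Definition in_U (k : nat) (R S : {set 'I_k}) : Prop :=
  R \proper S /\ #|S| = #|R|.+1.

Definition freezes_with (k n : nat) (pi : {set 'I_k} -> n.-tuple 'I_k)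
    (R A : {set 'I_k}) (g : 'I_k -> 'I_n) : Prop :=
  [/\ #|R| = n.-1, A \subset R, {in A &, injective g} &
      forall a S, a \in A -> in_U R S -> tnth (pi S) (g a) = a].

(* Main.v *)
Require Import Defs.
From mathcomp Require Import all_boot.
From mathcomp Require Import zify.

Theorem lemma3p7 (k n : nat) (hn : 3 <= n) (hnk : n <= k)
    (pi : {set 'I_k} -> n.-tuple 'I_k) (hpi : valid_pi pi)
    (Q R R' : {set 'I_k}) (hQ : #|Q| = n - 2)
    (hR : in_U Q R) (hR' : in_U Q R') (hRR' : R != R')
    (A A' : {set 'I_k}) (g g' : 'I_k -> 'I_n)
    (hfr : freezes_with pi R A g) (hfr' : freezes_with pi R' A' g') :
  forall a, a \in A -> a \in A' -> g a = g' a.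
Proof.
move=> a aA aA'.
case: hfr => cR sAR _ hg. case: hfr' => cR' sAR' _ hg'.
case: hR => pQR cQR. case: hR' => pQR' cQR'.
move: (pQR) (pQR'); rewrite !properEcard => /andP[sQR _] /andP[sQR' _].
have nRR' : ~~ (R \subset R').
  apply/negP => s; move/negP: hRR'; apply; rewrite eqEcard s /=.
  by rewrite cQR cQR'.
have nR'R : ~~ (R' \subset R).
  apply/negP => s; move/negP: hRR'; apply; rewrite eq_sym eqEcard s /=.
  by rewrite cQR cQR'.
have sQI : Q \subset R :&: R' by rewrite subsetI sQR sQR'.
have cI1 : #|Q| <= #|R :&: R'| by apply: subset_leq_card.
have cI2 : #|R :&: R'| < #|R|.
  rewrite ltn_neqAle subset_leq_card ?subsetIl // andbT.
  apply/negP => /eqP e.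
  have : R :&: R' == R by rewrite eqEcard subsetIl e leqnn.
  by move/eqP=> e2; move: nRR'; rewrite -e2 subsetIr.
have cU := cardsUI R R'.
have cS : #|R :|: R'| = n.
  move: cU cI1 cI2 cQR cQR' cR hQ hn.
  move: #|R :|: R'| #|R :&: R'| #|R| #|R'| #|Q| => u i r r' q.
  clear. lia.
have US : in_U R (R :|: R').
  split; last by rewrite cS cR; move: hn; clear; lia.
  by apply: properUl.
have US' : in_U R' (R :|: R').
  split; last by rewrite cS cR'; move: hn; clear; lia.
  by apply: properUr.
have e1 := hg a _ aA US. have e2 := hg' a _ aA' US'.
case: (hpi _ cS) => /tuple_uniqP inj _.
by apply: inj; rewrite e1 e2.
Qed.
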